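(* Let $G=(V,E)$ be a finite undirected graph with $|V|=n$, and let $G^{\ell}$ be the directed graph on $V$ obtained by replacing every edge $\{u,v\}\in E$ by the two arcs $u\to v$ and $v\to u$. Then for every linear ordering $\varphi$ of $V$, $$\mathrm{VS}(G,\varphi)\le \mathrm{RB}(G^{\ell},\varphi)\le \mathrm{VS}(G,\varphi)+1 .$$
   Context: A linear ordering of a finite vertex set $V$ with $|V|=n$ is a bijection $\varphi:\{1,\dots,n\}\to V$; write $\mathrm{pos}(u)=\varphi^{-1}(u)$. For an undirected graph $G=(V,E)$, the vertex separation value is $\mathrm{VS}(G,\varphi)=\max_{1\le i\le n}\left|\{u\in V:\exists\{u,v\}\in E \text{ with } \mathrm{pos}(u)\le i<\mathrm{pos}(v)\}\right|$. For a directed graph $D=(V,A)$ (a labeled dependency graph; an arc $u\to w$ means object $u$ depends on object $w$, i.e. $w$ must leave its start pose before $u$ can be placed at its goal), the running buffer count of $\varphi$ is defined by the following process: objects are picked in the order $\varphi(1),\varphi(2),\dots$; let $S_i=\{\varphi(1),\dots,\varphi(i)\}$ ($S_0=\emptyset$) and $B_i=\{u\in S_i:\exists\, (u\to w)\in A \text{ with } w\notin S_i\}$ (objects stored in an external buffer after step $i$, all others in $S_i$ having been placed at their goals at the earliest opportunity). Then $\mathrm{RB}(D,\varphi)=\max_{1\le i\le n}\big(|B_{i-1}|+[\varphi(i)\in B_i]\big)$, where $[\cdot]$ is $1$ if the condition holds and $0$ otherwise (when $\varphi(i)$ must itself go to the buffer, it is stored there before the objects it releases can leave the buffer). *)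

(* Defs.v *)
From mathcomp Require Import all_boot.
Set Implicit Arguments. Unset Strict Implicit. Unset Printing Implicit Defensive.

(* A linear ordering of the finite vertex set T is a bijection
   phi : 'I_#|T| -> T.  Positions are 0-based: phi (ord k) is the (k+1)-st
   object, so pos(u) = 1 + (index of u).  *)

(* S_i = {phi(1),...,phi(i)} (1-based), i.e. the vertices of 0-based index < i *)
Definition prefix (T : finType) (phi : 'I_#|T| -> T) (i : nat) : {set T} :=
  [set phi k | k : 'I_#|T| & k < i].

Definition simple_graph (T : finType) (e : rel T) : Prop :=
  symmetric e /\ irreflexive e.

Definition vs_cut (T : finType) (e : rel T) (phi : 'I_#|T| -> T) (i : nat)
  : {set T} :=
  [set u in prefix phi i | [exists v, e u v && (v \notin prefix phi i)]].

Definition VS (T : finType) (e : rel T) (phi : 'I_#|T| -> T) : nat :=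
  \max_(1 <= i < #|T|.+1) #|vs_cut e phi i|.

(* Directed graph given by an arc relation a : a u w  means  u -> w. *)
Definition buffer (T : finType) (a : rel T) (phi : 'I_#|T| -> T) (i : nat)
  : {set T} :=
  [set u in prefix phi i | [exists w, a u w && (w \notin prefix phi i)]].

(* RB(D, phi) = max_{1<=i<=n} (|B_{i-1}| + [phi(i) in B_i]);
   with 0-based k = i-1, phi(i) is phi k. *)
Definition RB (T : finType) (a : rel T) (phi : 'I_#|T| -> T) : nat :=
  \max_(k < #|T|) (#|buffer a phi k| + (phi k \in buffer a phi k.+1)).

Definition labeled_digraph (T : finType) (e : rel T) : rel T :=
  fun u w => e u w || e w u.

(* Main.v *)
Require Import Defs.
From mathcomp Require Import all_boot.

Section S.
Variables (T : finType) (e : rel T) (phi : 'I_#|T| -> T).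

Lemma pref_sub i : Defs.prefix phi i \subset Defs.prefix phi i.+1.
Proof.
apply/subsetP => u /imsetP [j]; rewrite inE => Hj ->.
by apply/imsetP; exists j => //; rewrite inE ltnS ltnW.
Qed.

Lemma pref0 : Defs.prefix phi 0 = set0.
Proof. by apply/setP => u; rewrite inE; apply/imsetP => [[j]]; rewrite inE. Qed.

Lemma cut_sub (inj : injective phi) (k : 'I_#|T|) u :
  u \in vs_cut e phi k.+1 -> u != phi k -> u \in vs_cut e phi k.
Proof.
rewrite !inE => /andP [/imsetP [j]]; rewrite inE => Hj -> /existsP [v /andP [Huv Hv]] Hne.
apply/andP; split.
  apply/imsetP; exists j => //; rewrite inE ltn_neqAle -ltnS Hj andbT.
  by apply: contra Hne => /eqP /val_inj ->.
apply/existsP; exists v; rewrite Huv /=.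
by apply: contra Hv; apply: (subsetP (pref_sub _)).
Qed.

Lemma cut_card (inj : injective phi) (k : 'I_#|T|) :
  #|vs_cut e phi k.+1| <= #|vs_cut e phi k| + (phi k \in vs_cut e phi k.+1).
Proof.
case: (boolP (phi k \in vs_cut e phi k.+1)) => H.
  have : vs_cut e phi k.+1 \subset phi k |: vs_cut e phi k.
    apply/subsetP => u Hu; rewrite in_setU1.
    case: eqP => //= /eqP Hne; exact: cut_sub.
  move/subset_leq_card; rewrite cardsU1 => /leq_trans; apply.
  by rewrite addnC leq_add2l leq_b1.
rewrite addn0; apply: subset_leq_card; apply/subsetP => u Hu.
apply: cut_sub => //; apply: contraNneq H => <-; done.
Qed.

End S.

Theorem lemma1 (T : finType) (e : rel T) (phi : 'I_#|T| -> T) :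
  simple_graph e -> bijective phi ->
  VS e phi <= RB (labeled_digraph e) phi <= VS e phi + 1.
Proof.
move=> [esym _] /bij_inj inj.
have Ha : buffer (labeled_digraph e) phi =1 vs_cut e phi.
  move=> i; apply/setP => u; rewrite !inE /labeled_digraph.
  congr (_ && _); apply: eq_existsb => v; by rewrite (esym v u) orbb.
rewrite /RB.
apply/andP; split.
  apply/bigmax_leqP_seq => i; rewrite mem_index_iota => /andP [Hi1 Hi2] _.
  have Hk : i.-1 < #|T| by rewrite prednK.
  have := @cut_card T e phi inj (Ordinal Hk); rewrite /= prednK // => H.
  apply: leq_trans H _.
  have := @leq_bigmax _ (fun k : 'I_#|T| => #|buffer (labeled_digraph e) phi k| + (phi k \in buffer (labeled_digraph e) phi k.+1)) (Ordinal Hk).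
  by rewrite /= !Ha prednK.
apply/bigmax_leqP => k _; rewrite !Ha.
case: (posnP k) => Hk.
  have -> : vs_cut e phi k = set0.
    apply/setP => u; rewrite Hk !inE pref0 inE; done.
  by rewrite cards0 add0n; apply: leq_trans (leq_b1 _) (leq_addl _ _).
apply: leq_add; last by apply: leq_b1.
rewrite /VS; apply: (@leq_bigmax_seq _ _ _ (fun i : nat => #|vs_cut e phi i|)) => //.
by rewrite mem_index_iota Hk ltnS ltnW.
Qed.
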